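(* Let $D=(E,\mathcal{F})$ be a proper set system, $a,b\in E$ with $a\neq b$, and let $A\subseteq E$ satisfy $|A\cap\{a,b\}|=0$ or $|A\cap\{a,b\}|=2$. Then $\omega(D* A)=\omega(\widetilde{D}_{ab}* A)$.
   Context: A set system $D=(E,\mathcal{F})$ is a finite set $E$ together with a collection $\mathcal{F}$ of subsets of $E$ (feasible sets); proper means $\mathcal{F}\neq\emptyset$. $\triangle$ denotes symmetric difference. For $A\subseteq E$, the twist is $D*A=(E,\{A\triangle X: X\in\mathcal{F}\})$. The width $\omega(D)$ of a proper set system is the size of a largest feasible set minus the size of a smallest feasible set. For distinct $a,b\in E$, the result of handle sliding of $a$ over $b$ is $\widetilde{D}_{ab}=(E,\widetilde{\mathcal{F}}_{ab})$ with $\widetilde{\mathcal{F}}_{ab}=\mathcal{F}\triangle\{F\cup\{a\}\mid F\cup\{b\}\in\mathcal{F},\ F\subseteq E\setminus\{a,b\}\}$. *)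

(* Defs.v *)
(* A set system D = (E, F) with E a finite type and
   F : {set {set E}} its family of feasible sets. *)
From mathcomp Require Import all_boot.
Set Implicit Arguments. Unset Strict Implicit. Unset Printing Implicit Defensive.

Section SetSystems.
Variable E : finType.

Definition symdiff (X Y : {set E}) : {set E} := (X :\: Y) :|: (Y :\: X).

Definition proper_ss (F : {set {set E}}) : bool := F != set0.

Definition twist (F : {set {set E}}) (A : {set E}) : {set {set E}} :=
  [set symdiff A X | X in F].

Definition fsymdiff (F G : {set {set E}}) : {set {set E}} := (F :\: G) :|: (G :\: F).

Definition handle_slide (F : {set {set E}}) (a b : E) : {set {set E}} :=
  fsymdiff F [set X :|: [set a] | X : {set E} &
                 (X \subset ~: [set a; b]) && (X :|: [set b] \in F)].

(* width: size of a largest feasible set minus size of a smallest one.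
   (Meaningful for proper set systems; the identity #|E| of the min is
   an upper bound for all sizes, so it is harmless when F is nonempty.) *)
Definition width (F : {set {set E}}) : nat :=
  (\max_(X in F) #|X|) - \big[minn/#|E|]_(X in F) #|X|.

End SetSystems.

(* Main.v *)
Require Import Defs.
From mathcomp Require Import all_boot.
Set Implicit Arguments. Unset Strict Implicit. Unset Printing Implicit Defensive.

Section S.
Variable E : finType.

Lemma min_seq_le (T : eqType) (r : seq T) (p : pred T) (f : T -> nat) n x :
  x \in r -> p x -> \big[minn/n]_(y <- r | p y) f y <= f x.
Proof.
move=> + px; elim: r => //= z r IH; rewrite inE big_cons => /orP [/eqP <-|/IH H].
  by rewrite px geq_minl.
by case: ifP => // _; rewrite geq_min H orbT.
Qed.

Lemma minP_le (P : {set {set E}}) X : X \in P -> \big[minn/#|E|]_(Y in P) #|Y| <= #|X|.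
Proof. by move=> XP; apply: min_seq_le => //; rewrite mem_index_enum. Qed.

Lemma minP_leE (P : {set {set E}}) : \big[minn/#|E|]_(Y in P) #|Y| <= #|E|.
Proof. by apply: (big_ind (fun v => v <= #|E|)) => // [x y Hx Hy|X _]; [by rewrite geq_min Hx | exact: max_card]. Qed.

Lemma min_mono (P Q : {set {set E}}) :
  (forall Y, Y \in Q -> exists2 X, X \in P & #|Y| = #|X|) ->
  \big[minn/#|E|]_(X in P) #|X| <= \big[minn/#|E|]_(Y in Q) #|Y|.
Proof.
move=> H; apply: (big_ind (fun v => _ <= v)) => //.
- exact: minP_leE.
- by move=> x y Hx Hy; rewrite leq_min Hx.
- by move=> Y /H [X XP ->]; apply: minP_le.
Qed.

Lemma max_mono (P Q : {set {set E}}) :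
  (forall X, X \in P -> exists2 Y, Y \in Q & #|X| = #|Y|) ->
  \max_(X in P) #|X| <= \max_(Y in Q) #|Y|.
Proof.
move=> H; apply/bigmax_leqP => X /H [Y YQ ->]; exact: leq_bigmax_cond.
Qed.

Lemma width_eq (P Q : {set {set E}}) :
  (forall X, X \in P -> exists2 Y, Y \in Q & #|X| = #|Y|) ->
  (forall Y, Y \in Q -> exists2 X, X \in P & #|Y| = #|X|) ->
  width P = width Q.
Proof.
move=> H1 H2; rewrite /width; congr (_ - _); apply/eqP; rewrite eqn_leq.
  by rewrite !max_mono.
by rewrite !min_mono // => Y /H1 [X XP ->]; exists X.
Qed.
End S.

Section Main.
Variables (E : finType) (a b : E).
Hypothesis ab : a != b.

Definition sw (x : E) := if x == a then b else if x == b then a else x.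

Lemma swK : involutive sw.
Proof.
move=> x; rewrite /sw; case: (eqVneq x a) => [->|xa]; first by rewrite eqxx; case: ifP => //; rewrite eq_sym (negbTE ab).
case: (eqVneq x b) => [->|xb]; first by rewrite eqxx.
by rewrite (negbTE xa) (negbTE xb).
Qed.

Lemma swap_card (A X : {set E}) : (a \in A) = (b \in A) -> X \subset ~: [set a; b] ->
  #|symdiff A (X :|: [set a])| = #|symdiff A (X :|: [set b])|.
Proof.
move=> hAB /subsetP sX.
have aX : a \notin X by apply/negP => /sX; rewrite !inE eqxx.
have bX : b \notin X by apply/negP => /sX; rewrite !inE eqxx orbT.
rewrite -(card_preimset (symdiff A (X :|: [set b])) (inv_inj swK)); congr #|pred_of_set _|; apply/setP => x.
rewrite /symdiff !inE /sw.
case: (eqVneq x a) => [->|xa].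
  by rewrite (negbTE aX) (negbTE bX) eqxx /= hAB.
case: (eqVneq x b) => [->|xb].
  by rewrite (negbTE aX) (negbTE bX) (negbTE ab) /= hAB.
by rewrite (negbTE xb).
Qed.
End Main.

Lemma hAB_of (E : finType) (a b : E) (A : {set E}) : a != b ->
  (#|A :&: [set a; b]| = 0 \/ #|A :&: [set a; b]| = 2) -> (a \in A) = (b \in A).
Proof.
move=> ab [/eqP|] h.
  rewrite cards_eq0 in h.
  have ha : a \notin A by apply/negP => aA; move/eqP/setP: h => /(_ a); rewrite !inE aA eqxx.
  have hb : b \notin A by apply/negP => bA; move/eqP/setP: h => /(_ b); rewrite !inE bA eqxx orbT.
  by rewrite (negbTE ha) (negbTE hb).
have : A :&: [set a; b] == [set a; b].
  by rewrite eqEcard subsetIr h cards2 ab.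
move/eqP/setP => e; have := e a; have := e b; rewrite !inE !eqxx orbT /=.
by rewrite !andbT => -> ->.
Qed.

Theorem proposition3p2 (E : finType) (F : {set {set E}}) (a b : E) (A : {set E}) :
  proper_ss F -> a != b ->
  (#|A :&: [set a; b]| = 0 \/ #|A :&: [set a; b]| = 2) ->
  width (twist F A) = width (twist (handle_slide F a b) A).
Proof.
move=> _ ab hc; have hAB := hAB_of ab hc.
set S := [set X :|: [set a] | X : {set E} & (X \subset ~: [set a; b]) && (X :|: [set b] \in F)].
have inG Y : (Y \in handle_slide F a b) = (Y \in F) (+) (Y \in S).
  rewrite /handle_slide /fsymdiff -/S !inE.
  by case: (Y \in F); case: (Y \in S).
have aS Y : Y \in S -> a \in Y.
  by case/imsetP => X _ ->; rewrite !inE eqxx orbT.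
have bnS (X : {set E}) : X \subset ~: [set a; b] -> X :|: [set b] \notin S.
  move=> /subsetP sX; apply/negP => /aS; rewrite !inE (negbTE ab) orbF => /sX.
  by rewrite !inE eqxx.
apply: width_eq.
- move=> _ /imsetP [Y YF ->].
  case YG : (Y \in handle_slide F a b).
    by exists (symdiff A Y) => //; apply: imset_f.
  have YS : Y \in S by move: YG; rewrite inG YF; case: (Y \in S).
  case/imsetP: (YS) => X; rewrite inE => /andP [sX XbF] ->.
  exists (symdiff A (X :|: [set b])); last exact: swap_card.
  by apply: imset_f; rewrite inG XbF (negbTE (bnS _ sX)).
- move=> _ /imsetP [Y YG ->].
  case YF : (Y \in F).
    by exists (symdiff A Y) => //; apply: imset_f.
  have YS : Y \in S by move: YG; rewrite inG YF; case: (Y \in S).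
  case/imsetP: (YS) => X; rewrite inE => /andP [sX XbF] ->.
  exists (symdiff A (X :|: [set b])); last exact: swap_card.
  by apply: imset_f.
Qed.
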